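(* Let $p$ be a prime, $a\in\mathbb{N}$, and put $\nu_p=1$ if $p=2$ and $\nu_p=0$ if $p>2$. Let $\mathbf{u}\in(\mathbb{Z}/p^a\mathbb{Z})^4$ with $p\nmid\mathbf{u}$ and $Q_1(\mathbf{u})\equiv Q_2(\mathbf{u})\equiv0\bmod p^a$. Then for every integer $b>a$, $$\#\big\{\mathbf{v}\in(\mathbb{Z}/p^b\mathbb{Z})^4:\ Q_1(\mathbf{v})\equiv Q_2(\mathbf{v})\equiv0\bmod p^b,\ \mathbf{v}\equiv\mathbf{u}\bmod p^a\big\}\le\begin{cases}p^{2(b-a)}&\text{if }p\nmid\Delta,\\ p^{2\nu_p+3(b-a)}&\text{if }p\mid\Delta.\end{cases}$$
   Context: $L_i(x_1,x_2)=a_ix_1+b_ix_2\in\mathbb{Z}[x_1,x_2]$ ($1\le i\le4$) with $\gcd(a_i,b_i)=1$ and pairwise non-proportional; $Q_1(\mathbf{y})=\sum_{i=1}^4a_iy_i^2$, $Q_2(\mathbf{y})=-\sum_{i=1}^4b_iy_i^2$. $\Delta=\prod_{p\in\mathcal{P}}p$ where $\mathcal{P}=\{2\}\cup\{p\text{ prime}: p\mid a_ib_j-a_jb_i\text{ for some }i\ne j\}$. $p\nmid\mathbf{u}$ means not all coordinates of $\mathbf{u}$ are divisible by $p$. *)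

(* Defs.v *)
From mathcomp Require Import all_boot all_order all_algebra.
Set Implicit Arguments. Unset Strict Implicit. Unset Printing Implicit Defensive.
Import Order.TTheory GRing.Theory Num.Theory.
Local Open Scope ring_scope.

(* Linear forms L_i = a_i x1 + b_i x2, encoded by coefficient families a b : 'I_4 -> int. *)

Definition detL (a b : 'I_4 -> int) (i j : 'I_4) : int := a i * b j - a j * b i.

Definition forms_ok (a b : 'I_4 -> int) : Prop :=
  (forall i, gcdz (a i) (b i) = 1%N) /\ (forall i j, i != j -> detL a b i j != 0).

Definition inP (a b : 'I_4 -> int) (p : nat) : bool :=
  prime p && ((p == 2)%N ||
    [exists i : 'I_4, exists j : 'I_4, (i != j) && (p%:Z %| detL a b i j)%Z]).

(* An upper bound for all elements of P (when the forms are non-proportional). *)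
Definition Pbound (a b : 'I_4 -> int) : nat :=
  (2 * \prod_(i : 'I_4) \prod_(j : 'I_4 | i != j) `|detL a b i j|%N)%N.

Definition Delta (a b : 'I_4 -> int) : nat :=
  (\prod_(p < (Pbound a b).+1 | inP a b p) p)%N.

Definition Q1 (a : 'I_4 -> int) (y : 'I_4 -> int) : int := \sum_(i < 4) a i * y i ^+ 2.
Definition Q2 (b : 'I_4 -> int) (y : 'I_4 -> int) : int := - \sum_(i < 4) b i * y i ^+ 2.

Definition liftv (m : nat) (v : {ffun 'I_4 -> 'I_m}) : 'I_4 -> int := fun i => (v i : nat)%:Z.

Definition nu (p : nat) : nat := if p == 2%N then 1%N else 0%N.

(* Main.v *)
Require Import Defs.
From mathcomp Require Import all_boot all_order all_algebra zify ring.
Import Order.TTheory GRing.Theory Num.Theory.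
Set Implicit Arguments. Unset Strict Implicit. Unset Printing Implicit Defensive.
Local Open Scope ring_scope.

Section Hensel.
Variables (a b : 'I_4 -> int) (p ea : nat) (u : {ffun 'I_4 -> 'I_(p ^ ea)}).
Hypothesis pr : prime p.
Hypothesis ea_gt0 : (0 < ea)%N.

Lemma p_gt0 : (0 < p)%N. Proof. exact: prime_gt0. Qed.
Lemma pc_gt0 c : (0 < p ^ c)%N. Proof. by rewrite expn_gt0 p_gt0. Qed.

Definition SS (m c : nat) : {set {ffun 'I_4 -> 'I_(p ^ c)}} :=
  [set v | [&& ((p ^ m)%:Z %| Q1 a (liftv v))%Z,
           ((p ^ m)%:Z %| Q2 b (liftv v))%Z &
           [forall i, (liftv v i == liftv u i %[mod (p ^ ea)%:Z])%Z]]].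

Definition red c (v : {ffun 'I_4 -> 'I_(p ^ c.+1)}) : {ffun 'I_4 -> 'I_(p ^ c)} :=
  [ffun i => Ordinal (ltn_pmod (v i) (pc_gt0 c))].
Definition dig c (v : {ffun 'I_4 -> 'I_(p ^ c.+1)}) i : nat := ((v i) %/ p ^ c)%N.

Lemma dig_lt c v i : (@dig c v i < p)%N.
Proof. rewrite /dig ltn_divLR ?pc_gt0 // -expnS; exact: ltn_ord. Qed.

Lemma dec_nat c (v : {ffun 'I_4 -> 'I_(p ^ c.+1)}) i : (v i : nat) = (red v i + p ^ c * @dig c v i)%N.
Proof. by rewrite /red /dig ffunE /= addnC mulnC -divn_eq. Qed.

Lemma dec c (v : {ffun 'I_4 -> 'I_(p ^ c.+1)}) i : liftv v i = liftv (@red c v) i + (p ^ c)%:Z * (dig v i)%:Z.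
Proof. by rewrite /liftv {1}(dec_nat v i) PoszD PoszM. Qed.

Definition Qg (k : 'I_4 -> int) (y : 'I_4 -> int) : int := \sum_(i < 4) k i * y i ^+ 2.

Lemma Qg_exp c k (v : {ffun 'I_4 -> 'I_(p ^ c.+1)}) :
  Qg k (liftv v) = Qg k (liftv (@red c v))
   + 2 * (p ^ c)%:Z * (\sum_i k i * liftv (red v) i * (dig v i)%:Z)
   + ((p ^ c)%:Z) ^+ 2 * (\sum_i k i * ((dig v i)%:Z) ^+ 2).
Proof.
rewrite /Qg !mulr_sumr -!big_split /=; apply: eq_bigr => i _.
rewrite dec; ring.
Qed.

Lemma card_fiber m m' c (J : {set 'I_4}) :
 (forall v, v \in SS m' c.+1 -> red v \in SS m c) ->
 (forall v v', v \in SS m' c.+1 -> v' \in SS m' c.+1 -> red v = red v' ->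
    (forall i, i \notin J -> @dig c v i = dig v' i) -> forall i, i \in J -> dig v i = dig v' i) ->
 (#|SS m' c.+1| <= p ^ #|~: J| * #|SS m c|)%N.
Proof.
move=> Hmap Hinj.
rewrite -sum1_card (partition_big (@red c) (mem (SS m c))) //=.
rewrite mulnC -sum_nat_const leq_sum // => x _.
rewrite sum1dep_card.
pose o0 : 'I_p := Ordinal p_gt0.
pose h (v : {ffun 'I_4 -> 'I_(p ^ c.+1)}) : {ffun 'I_4 -> 'I_p} :=
  [ffun i => if i \in J then o0 else Ordinal (dig_lt v i)].
set F := [set _ in _ | _].
have hinj : {in F &, injective h}.
  move=> v v' /setIdP[Hv /eqP Hx] /setIdP[Hv' /eqP Hx'] Hh.
  have Hd : forall i, i \notin J -> dig v i = dig v' i.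
    move=> i Hi; have := congr1 (fun f : {ffun 'I_4 -> 'I_p} => val (f i)) Hh.
    by rewrite /h !ffunE (negbTE Hi).
  apply/ffunP => i; apply: val_inj => /=.
  rewrite (dec_nat v) (dec_nat v') Hx Hx'.
  case: (boolP (i \in J)) => Hi; last by rewrite Hd.
  by rewrite (Hinj v v') // ?Hx ?Hx'.
rewrite -(card_in_imset hinj).
pose Fam (i : 'I_4) : pred 'I_p := if i \in J then pred1 o0 else predT.
apply: leq_trans (_ : #|family Fam| <= _)%N.
  apply: subset_leq_card; apply/subsetP => f /imsetP[v _ ->].
  apply/familyP => i; rewrite /Fam /h ffunE; by case: (i \in J).
rewrite card_family foldrE big_map big_enum /=.
rewrite (bigID (mem J)) /= big1; last first.
  by move=> i Hi; rewrite /Fam Hi card1.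
rewrite mul1n (eq_bigr (fun _ => p)); last first.
  by move=> i Hi; rewrite /Fam (negbTE Hi) card_ord.
rewrite prod_nat_const; apply: eq_leq; congr (expn _ _).
by apply: eq_card => i; rewrite !inE.
Qed.

Lemma dvdz_natE (d m : nat) : (d%:Z %| m%:Z)%Z = (d %| m)%N.
Proof. by rewrite dvdzE. Qed.

Lemma modZ_nat (m n d : nat) : (m%:Z == n%:Z %[mod d%:Z])%Z = (m == n %[mod d])%N.
Proof. by rewrite !modz_nat eqz_nat. Qed.

Lemma pow_dvd2 m c : (m <= 2 * c)%N -> ((p ^ m)%:Z %| (p ^ c)%:Z ^+ 2)%Z.
Proof.
move=> H; rewrite expr2 -PoszM -expnD dvdz_natE dvdn_exp2l //; lia.
Qed.

Lemma Q1g y : Q1 a y = Qg a y. Proof. by []. Qed.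
Lemma Q2g y : Q2 b y = - Qg b y. Proof. by []. Qed.

Lemma red_Qg m c k (v : {ffun 'I_4 -> 'I_(p ^ c.+1)}) :
  ((p ^ m)%:Z %| 2 * (p ^ c)%:Z)%Z -> (m <= 2 * c)%N ->
  ((p ^ m)%:Z %| Qg k (liftv v))%Z -> ((p ^ m)%:Z %| Qg k (liftv (red v)))%Z.
Proof.
move=> H2 Hm Hv.
have -> : Qg k (liftv (red v)) = Qg k (liftv v)
   - 2 * (p ^ c)%:Z * (\sum_i k i * liftv (red v) i * (dig v i)%:Z)
   - ((p ^ c)%:Z) ^+ 2 * (\sum_i k i * ((dig v i)%:Z) ^+ 2).
  by rewrite (Qg_exp k v); ring.
rewrite rpredB // ?rpredB //; first exact: dvdz_mulr.
by apply: dvdz_mulr; apply: pow_dvd2.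
Qed.

Lemma red_cong c (v : {ffun 'I_4 -> 'I_(p ^ c.+1)}) i : (ea <= c)%N ->
  (liftv v i == liftv u i %[mod (p ^ ea)%:Z])%Z ->
  (liftv (red v) i == liftv u i %[mod (p ^ ea)%:Z])%Z.
Proof.
move=> Hc; rewrite /liftv !modZ_nat /red ffunE /=.
by rewrite (modn_dvdm _ (dvdn_exp2l p Hc)).
Qed.

Lemma red_map m m' c : (ea <= c)%N -> (m <= m')%N ->
  ((p ^ m)%:Z %| 2 * (p ^ c)%:Z)%Z -> (m <= 2 * c)%N ->
  forall v, v \in SS m' c.+1 -> red v \in SS m c.
Proof.
move=> Hc Hmm H2 Hm v; rewrite !inE => /and3P[H1 H2' /forallP H3].
have Hd : ((p ^ m)%:Z %| (p ^ m')%:Z)%Z by rewrite dvdz_natE dvdn_exp2l.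
apply/and3P; split.
- by rewrite Q1g (red_Qg H2 Hm) // -Q1g (dvdz_trans Hd).
- rewrite Q2g rpredN (red_Qg H2 Hm) // -rpredN -Q2g (dvdz_trans Hd) //.
- by apply/forallP => i; apply: red_cong.
Qed.

Definition good (J : {set 'I_4}) := forall d : 'I_4 -> int,
  (forall i, i \notin J -> d i = 0) ->
  (p%:Z %| \sum_i a i * liftv u i * d i)%Z ->
  (p%:Z %| \sum_i b i * liftv u i * d i)%Z -> forall i, i \in J -> (p%:Z %| d i)%Z.

Lemma stepA m' c k (v v' : {ffun 'I_4 -> 'I_(p ^ c.+1)}) :
  (m' <= 2 * c)%N ->
  (forall L : int, ((p ^ m')%:Z %| 2 * (p ^ c)%:Z * L)%Z -> (p%:Z %| L)%Z) ->
  red v = red v' ->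
  ((p ^ m')%:Z %| Qg k (liftv v))%Z -> ((p ^ m')%:Z %| Qg k (liftv v'))%Z ->
  (p%:Z %| \sum_i k i * liftv (red v) i * ((dig v i)%:Z - (dig v' i)%:Z))%Z.
Proof.
move=> Hm Hcan Hr H1 H2; apply: Hcan.
have -> : 2 * (p ^ c)%:Z * (\sum_i k i * liftv (red v) i * ((dig v i)%:Z - (dig v' i)%:Z))
   = (Qg k (liftv v) - Qg k (liftv v'))
     - ((p ^ c)%:Z) ^+ 2 * (\sum_i k i * ((dig v i)%:Z) ^+ 2 - \sum_i k i * ((dig v' i)%:Z) ^+ 2).
  rewrite (Qg_exp k v) (Qg_exp k v') -Hr.
  have -> : \sum_i k i * liftv (red v) i * ((dig v i)%:Z - (dig v' i)%:Z)
    = \sum_i k i * liftv (red v) i * (dig v i)%:Z - \sum_i k i * liftv (red v) i * (dig v' i)%:Z.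
    by rewrite -sumrB; apply: eq_bigr => i _; ring.
  ring.
by rewrite rpredB ?rpredB //; apply: dvdz_mulr; apply: pow_dvd2.
Qed.

Lemma stepB c k (x : {ffun 'I_4 -> 'I_(p ^ c)}) (d : 'I_4 -> int) :
  (forall i, (liftv x i == liftv u i %[mod (p ^ ea)%:Z])%Z) ->
  (p%:Z %| \sum_i k i * liftv x i * d i)%Z ->
  (p%:Z %| \sum_i k i * liftv u i * d i)%Z.
Proof.
move=> Hx H.
have -> : \sum_i k i * liftv u i * d i = \sum_i k i * liftv x i * d i
   - \sum_i k i * (liftv x i - liftv u i) * d i.
  by rewrite -sumrB; apply: eq_bigr => i _; ring.
rewrite rpredB //; apply: rpred_sum => i _.
apply: dvdz_mulr; apply: dvdz_mull.
have := Hx i; rewrite eqz_mod_dvd => /(dvdz_trans _); apply.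
by rewrite dvdz_natE -{1}(expn1 p) dvdn_exp2l.
Qed.

Lemma dig_eq (t t' : nat) : (t < p)%N -> (t' < p)%N ->
  (p%:Z %| t%:Z - t'%:Z)%Z -> t = t'.
Proof.
move=> Ht Ht'; rewrite dvdzE => H.
case: (leqP t' t) => Hle.
  move: H; rewrite distnEl // => H.
  case: (posnP (t - t')) => H0; first lia.
  have := dvdn_leq H0 H; lia.
move: H; rewrite distnC distnEl ?(ltnW Hle) // => H.
case: (posnP (t' - t)) => H0; first lia.
have := dvdn_leq H0 H; lia.
Qed.

Lemma fiber_inj m' c J : (ea <= c)%N -> (m' <= 2 * c)%N ->
  (forall L : int, ((p ^ m')%:Z %| 2 * (p ^ c)%:Z * L)%Z -> (p%:Z %| L)%Z) ->
  good J ->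
  forall v v', v \in SS m' c.+1 -> v' \in SS m' c.+1 -> red v = red v' ->
    (forall i, i \notin J -> @dig c v i = dig v' i) -> forall i, i \in J -> dig v i = dig v' i.
Proof.
move=> Hc Hm Hcan Hg v v'; rewrite !inE => /and3P[Ha Hb /forallP Hu] /and3P[Ha' Hb' _] Hr Hoff i Hi.
have Hx : forall i, (liftv (red v) i == liftv u i %[mod (p ^ ea)%:Z])%Z.
  by move=> j; apply: red_cong.
apply: dig_eq; [exact: dig_lt | exact: dig_lt |].
apply: (Hg (fun i => (dig v i)%:Z - (dig v' i)%:Z)) => //.
- by move=> j Hj; rewrite Hoff // subrr.
- apply: (stepB Hx); apply: (stepA Hm Hcan Hr) => //.
- apply: (stepB Hx); apply: (stepA Hm Hcan Hr).
  + by rewrite -rpredN -Q2g.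
  + by rewrite -rpredN -Q2g.
Qed.

Lemma euclidz (x y : int) : (p%:Z %| x * y)%Z = (p%:Z %| x)%Z || (p%:Z %| y)%Z.
Proof. by rewrite !dvdzE abszM Euclid_dvdM. Qed.

Lemma two_int : (2 : int) = (2%N)%:Z. Proof. by []. Qed.

Lemma canc_odd c : p != 2%N -> forall L : int,
  ((p ^ c.+1)%:Z %| 2 * (p ^ c)%:Z * L)%Z -> (p%:Z %| L)%Z.
Proof.
move=> Hp L; rewrite !dvdzE two_int !abszM /= expnS.
rewrite [(2 * _)%N]mulnC -mulnA [(p * _)%N]mulnC dvdn_pmul2l ?pc_gt0 //.
rewrite Euclid_dvdM // => /orP[] // H2.
have := dvdn_leq (isT : (0 < 2)%N) H2; have := prime_gt1 pr; move: Hp; lia.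
Qed.

Lemma canc_two c : p = 2%N -> forall L : int,
  ((p ^ c.+2)%:Z %| 2 * (p ^ c)%:Z * L)%Z -> (p%:Z %| L)%Z.
Proof.
move=> Hp L; rewrite !dvdzE two_int !abszM /= !expnS Hp.
have -> : (2 * (2 * 2 ^ c))%N = (2 ^ c * 2 * 2)%N by ring.
have -> : (2 * 2 ^ c * `|L|)%N = (2 ^ c * 2 * `|L|)%N by ring.
by rewrite -mulnA -[(2 ^ c * 2 * `|L|)%N]mulnA dvdn_pmul2l ?muln_gt0 ?expn_gt0 // dvdn_pmul2l.
Qed.

Lemma base m : (#|SS m ea| <= 1)%N.
Proof.
apply: leq_trans (_ : #|[set u]| <= 1)%N; last by rewrite cards1.
apply: subset_leq_card; apply/subsetP => v.
rewrite !inE => /and3P[_ _ /forallP H]; apply/eqP/ffunP => i.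
apply: val_inj; have := H i; rewrite /liftv modZ_nat !modn_small //.
by move/eqP.
Qed.

Lemma chain_odd J : p != 2%N -> good J ->
  forall n, (#|SS (ea + n) (ea + n)| <= p ^ (#|~: J| * n))%N.
Proof.
move=> Hp Hg; elim=> [|n IH]; first by rewrite !addn0 muln0 base.
rewrite addnS mulnS expnD.
set c := (ea + n)%N.
have Hc : (ea <= c)%N by rewrite /c leq_addr.
apply: leq_trans (card_fiber (m := c) (J := J) _ _) _.
- apply: red_map => //; [by apply: dvdz_mull | lia].
- apply: fiber_inj => //; first lia.
  exact: canc_odd.

by rewrite leq_mul2l IH orbT.
Qed.

Lemma chain_two J : p = 2%N -> good J -> #|~: J| = 3%N ->
  forall n, (#|SS (ea + n).+1 (ea + n)| <= 2 * 8 ^ n)%N.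
Proof.
move=> Hp Hg HJ; elim=> [|n IH]; first by rewrite addn0 expn0 muln1 (leq_trans (base _)).
set c := (ea + n)%N.
have Hc : (ea <= c)%N by rewrite /c leq_addr.
have H2 : ((p ^ c.+1)%:Z %| 2 * (p ^ c)%:Z)%Z.
  by rewrite Hp two_int -PoszM dvdz_natE expnS.
rewrite addnS.
case: (leqP 2 c) => Hc2.
  apply: leq_trans (card_fiber (m := c.+1) (J := J) _ _) _.
  - apply: red_map => //; lia.
  - apply: fiber_inj => //; first lia.
    exact: canc_two.
  have -> : (2 * 8 ^ n.+1 = p ^ 3 * (2 * 8 ^ n))%N by rewrite Hp expnS; ring.
  by rewrite HJ leq_mul2l IH orbT.
have Hn : n = 0%N by move: Hc2 Hc; rewrite /c; lia.
have Hea : c = ea by rewrite /c Hn addn0.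
apply: leq_trans (card_fiber (m := c.+1) (J := set0) _ _) _.
- apply: red_map => //; lia.
- by move=> v v' _ _ _ _ i; rewrite inE.
rewrite setC0 cardsT card_ord Hn Hea.
have -> : (2 * 8 ^ 1 = p ^ 4 * 1)%N by rewrite Hp.
by rewrite leq_mul2l addn0 base orbT.
Qed.

Lemma good1 i : gcdz (a i) (b i) = 1%N -> ~~ (p%:Z %| liftv u i)%Z -> good [set i].
Proof.
move=> Hgcd Hu d Hd Ha Hb j; rewrite inE => /eqP ->.
have sumE k : \sum_j k j * liftv u j * d j = k i * liftv u i * d i.
  rewrite (bigD1 i) //= big1 ?addr0 // => j' Hj; by rewrite Hd ?mulr0 // inE.
rewrite sumE !euclidz (negbTE Hu) orbF in Ha.
rewrite sumE !euclidz (negbTE Hu) orbF in Hb.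
case/orP: Ha => // Ha; case/orP: Hb => // Hb.
have : (p%:Z %| gcdz (a i) (b i))%Z by rewrite dvdz_gcd Ha Hb.
rewrite Hgcd dvdz_natE dvdn1 => /eqP p1; by move: pr; rewrite p1.
Qed.

Lemma good2 i j : i != j -> ~~ (p%:Z %| detL a b i j)%Z ->
  ~~ (p%:Z %| liftv u i)%Z -> ~~ (p%:Z %| liftv u j)%Z -> good [set i; j].
Proof.
move=> Hij Hdet Hui Huj d Hd Ha Hb.
have sumE k : \sum_l k l * liftv u l * d l = k i * liftv u i * d i + k j * liftv u j * d j.
  rewrite (bigD1 i) //= (bigD1 j) 1?eq_sym //= big1 ?addr0 // => l /andP[Hl1 Hl2].
  by rewrite Hd ?mulr0 // !inE negb_or Hl1 Hl2.
rewrite sumE in Ha; rewrite sumE in Hb.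
have E1 : detL a b i j * (liftv u i * d i) =
   b j * (a i * liftv u i * d i + a j * liftv u j * d j)
   - a j * (b i * liftv u i * d i + b j * liftv u j * d j) by rewrite /detL; ring.
have E2 : detL a b i j * (liftv u j * d j) =
   a i * (b i * liftv u i * d i + b j * liftv u j * d j)
   - b i * (a i * liftv u i * d i + a j * liftv u j * d j) by rewrite /detL; ring.
move=> l; rewrite !inE => /orP[] /eqP ->.
  have : (p%:Z %| detL a b i j * (liftv u i * d i))%Z.
    by rewrite E1 rpredB // dvdz_mull.
  by rewrite !euclidz (negbTE Hdet) (negbTE Hui).
have : (p%:Z %| detL a b i j * (liftv u j * d j))%Z.
  by rewrite E2 rpredB // dvdz_mull.
by rewrite !euclidz (negbTE Hdet) (negbTE Huj).
Qed.

Lemma gcd_contra i : gcdz (a i) (b i) = 1%N ->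
  (p%:Z %| a i)%Z -> (p%:Z %| b i)%Z -> False.
Proof.
move=> Hgcd Ha Hb.
have : (p%:Z %| gcdz (a i) (b i))%Z by rewrite dvdz_gcd Ha Hb.
rewrite Hgcd dvdz_natE dvdn1 => /eqP p1; by move: pr; rewrite p1.
Qed.

Lemma only_one k i : (p%:Z %| Qg k (liftv u))%Z ->
  (forall j, j != i -> (p%:Z %| liftv u j)%Z) -> ~~ (p%:Z %| liftv u i)%Z ->
  (p%:Z %| k i)%Z.
Proof.
move=> HQ Hj Hu.
have : (p%:Z %| k i * liftv u i ^+ 2)%Z.
  move: HQ; rewrite /Qg (bigD1 i) //= => H.
  have H2 : (p%:Z %| \sum_(j < 4 | j != i) k j * liftv u j ^+ 2)%Z.
    by apply: rpred_sum => j Hji; rewrite expr2 dvdz_mull // dvdz_mull // Hj.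
  by have := rpredB H H2; rewrite addrK.
by rewrite expr2 !euclidz (negbTE Hu) !orbF.
Qed.

Lemma exists_good1 : forms_ok a b -> (exists i, ~~ (p%:Z %| liftv u i)%Z) ->
  exists J, good J /\ #|~: J| = 3%N.
Proof.
move=> [Hg _] [i Hi]; exists [set i]; split; first exact: good1.
by rewrite cardsC1 card_ord.
Qed.

Lemma pdvd_pea x : ((p ^ ea)%:Z %| x)%Z -> (p%:Z %| x)%Z.
Proof. apply: dvdz_trans; by rewrite dvdz_natE -{1}(expn1 p) dvdn_exp2l. Qed.

Lemma exists_good2 : forms_ok a b -> (exists i, ~~ (p%:Z %| liftv u i)%Z) ->
  ((p ^ ea)%:Z %| Q1 a (liftv u))%Z -> ((p ^ ea)%:Z %| Q2 b (liftv u))%Z ->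
  (forall i j, i != j -> ~~ (p%:Z %| detL a b i j)%Z) ->
  exists J, good J /\ #|~: J| = 2%N.
Proof.
move=> [Hg _] [i Hi] H1 H2 Hdet.
case: (pickP (fun j => (j != i) && ~~ (p%:Z %| liftv u j)%Z)) => [j /andP[Hji Hj] | Hnone].
  exists [set i; j]; split; first by apply: (good2 _ (Hdet _ _ _) Hi Hj); rewrite eq_sym.
  have := cardsC [set i; j]; rewrite cards2 eq_sym Hji card_ord => H.
  by rewrite -(addKn 2 #|~: _|) H.
exfalso.
have Hj : forall j, j != i -> (p%:Z %| liftv u j)%Z.
  by move=> j Hj; have := Hnone j; rewrite /= Hj /= => /negbFE.
apply: (gcd_contra (Hg i)).
  by apply: (only_one _ Hj Hi); rewrite -Q1g pdvd_pea.
by apply: (only_one _ Hj Hi); rewrite -rpredN -Q2g pdvd_pea.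
Qed.

Lemma notDelta : forms_ok a b -> ~~ (p %| Delta a b)%N ->
  p != 2%N /\ forall i j, i != j -> ~~ (p%:Z %| detL a b i j)%Z.
Proof.
move=> [_ Hne] HD.
have Hpos : (0 < Pbound a b)%N.
  rewrite /Pbound muln_gt0 /=; apply: prodn_gt0 => i; apply: prodn_cond_gt0 => j Hij.
  by rewrite absz_gt0 Hne.
have key : inP a b p -> (p %| Pbound a b)%N -> (p %| Delta a b)%N.
  move=> HP Hdv.
  have Hlt : (p < (Pbound a b).+1)%N by rewrite ltnS dvdn_leq.
  by rewrite /Delta (bigD1 (Ordinal Hlt)) //=; apply: dvdn_mulr.
split.
  apply/negP => /eqP Hp2; move/negP: HD; apply; apply: key.
    by rewrite /inP pr Hp2.
  by rewrite /Pbound Hp2 dvdn_mulr.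
move=> i j Hij; apply/negP => Hd; move/negP: HD; apply; apply: key.
  rewrite /inP pr; apply/orP; right; apply/existsP; exists i; apply/existsP; exists j.
  by rewrite Hij.
rewrite /Pbound; apply: dvdn_mull.
rewrite (bigD1 i) //=; apply: dvdn_mulr.
rewrite (bigD1 j) //=; apply: dvdn_mulr.
by move: Hd; rewrite dvdzE.
Qed.
End Hensel.

Theorem lemma3p3 (a b : 'I_4 -> int) (p ea : nat) (u : {ffun 'I_4 -> 'I_(p ^ ea)}) :
  forms_ok a b ->
  prime p ->
  (exists i, ~~ (p%:Z %| liftv u i)%Z) ->
  ((p ^ ea)%:Z %| Q1 a (liftv u))%Z ->
  ((p ^ ea)%:Z %| Q2 b (liftv u))%Z ->
  forall eb : nat, (ea < eb)%N ->
  (#|[set v : {ffun 'I_4 -> 'I_(p ^ eb)} |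
       [&& ((p ^ eb)%:Z %| Q1 a (liftv v))%Z,
           ((p ^ eb)%:Z %| Q2 b (liftv v))%Z &
           [forall i, (liftv v i == liftv u i %[mod (p ^ ea)%:Z])%Z]]]|
   <= if ~~ (p %| Delta a b)%N then p ^ (2 * (eb - ea))
      else p ^ (2 * nu p + 3 * (eb - ea)))%N.
Proof.
move=> Hok pr Hu H1 H2 eb Hab.
have ea_gt0 : (0 < ea)%N.
  move: u Hu {H1 H2}; case: ea Hab => // Hab u [i]; rewrite /liftv.
  have : (val (u i) < 1)%N by apply: leq_trans (ltn_ord (u i)) _; rewrite expn0.
  rewrite ltnS leqn0 => /eqP ->; by rewrite dvdz0.
rewrite -/(@SS a b p ea u eb eb).
have [n Hn] : exists n, eb = (ea + n)%N by exists (eb - ea)%N; lia.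
subst eb; rewrite addKn.
case: ifP => HD.
  have [Hp2 Hdet] := notDelta pr Hok HD.
  have [J [HJ HJc]] := exists_good2 pr ea_gt0 Hok Hu H1 H2 Hdet.
  by have := chain_odd pr ea_gt0 Hp2 HJ n; rewrite HJc.
have [J [HJ HJc]] := exists_good1 pr Hok Hu.
case: (eqVneq p 2%N) => Hp2; last first.
  have := chain_odd pr ea_gt0 Hp2 HJ n; rewrite HJc /nu (negbTE Hp2) muln0 add0n mulnC.
  by [].
case: n Hab => [|n] Hab; first by rewrite addn0 ltnn in Hab.
rewrite addnS.
have Hc : (ea <= ea + n)%N by rewrite leq_addr.
have H2c : ((p ^ (ea + n).+1)%:Z %| 2 * (p ^ (ea + n))%:Z)%Z.
  by rewrite Hp2 two_int -PoszM dvdz_natE expnS.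
apply: leq_trans (card_fiber (u := u) (pr := pr) (m := (ea + n).+1) (J := set0) _ _) _.
- apply: (red_map pr ea_gt0) => //.
  by rewrite -[X in (X < _)%N]addn0 mul2n -addnn ltn_add2l addn_gt0 ea_gt0.
- by move=> v v' _ _ _ _ i; rewrite inE.
rewrite setC0 cardsT card_ord.
have := chain_two pr ea_gt0 Hp2 HJ HJc n => H.
apply: leq_trans (_ : p ^ 4 * (2 * 8 ^ n) <= _)%N.
  by rewrite leq_mul2l H orbT.
rewrite /nu Hp2 eqxx muln1 expnD mulnS expnD expnM.
by apply: eq_leq; ring.
Qed.
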